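(* Let $q\neq0$ be real. Let $\mathcal M$ be a binary matroid represented by a matrix $M$ over $\mathrm{GF}(2)$ with rows $V$ and columns $E$, let $\boldsymbol\gamma=\{\gamma_e\}_{e\in E}$ be real weights, and let $c\in E$. Suppose $\gamma_1>0$ and $\gamma_2>0$ satisfy $1+\frac{q}{\gamma_c}=\left(1+\frac{q}{\gamma_1}\right)\left(1+\frac{q}{\gamma_2}\right)$. Let $e'$ be a new column and define $\boldsymbol\gamma'=\{\gamma'_e\}_{e\in E\cup\{e'\}}$ by $\gamma'_{e'}=\gamma_2$, $\gamma'_c=\gamma_1$ and $\gamma'_e=\gamma_e$ for all other $e\in E$. Then there is a binary matroid $\mathcal M'$ represented by a matrix $M'$ over $\mathrm{GF}(2)$ with $|V|+1$ rows and columns $E\cup\{e'\}$ such that $\left(1+\frac{\gamma_1}{q}+\frac{\gamma_2}{q}\right)\tilde Z(\mathcal M;q,\boldsymbol\gamma)=\tilde Z(\mathcal M';q,\boldsymbol\gamma')$.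
   Context: A binary matroid represented by a matrix $M$ over $\mathrm{GF}(2)$ with rows $V$ and columns $E$ has ground set $E$ and rank function $r_{\mathcal M}(A)=$ the $\mathrm{GF}(2)$-rank of the submatrix formed by the columns in $A$. The multivariate Tutte polynomial is $\tilde Z(\mathcal M;q,\boldsymbol\gamma)=\sum_{A\subseteq E}q^{-r_{\mathcal M}(A)}\prod_{e\in A}\gamma_e$. *)

(* Defs.v *)
From HB Require Import structures.
From mathcomp Require Import all_boot all_order all_algebra all_fingroup.
Set Implicit Arguments. Unset Strict Implicit. Unset Printing Implicit Defensive.
Import Order.TTheory GRing.Theory Num.Theory.
Local Open Scope ring_scope.

(* A binary matroid is represented by a matrix over GF(2) = 'F_2 with m rows
   (the set V, |V| = m) and n columns (the ground set E = 'I_n). *)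

Definition mrank (m n : nat) (M : 'M['F_2]_(m, n)) (A : {set 'I_n}) : nat :=
  \rank (colsub (fun i : 'I_#|A| => enum_val i) M).

Definition Ztilde (R : fieldType) (m n : nat) (M : 'M['F_2]_(m, n))
    (q : R) (gamma : 'I_n -> R) : R :=
  \sum_(A : {set 'I_n}) q ^- (mrank M A) * \prod_(e in A) gamma e.

(* Old column e of E is embedded in E u {e'} = 'I_n.+1 as widen_ord; the new
   column e' is ord_max. *)
Definition old_col (n : nat) (e : 'I_n) : 'I_n.+1 := widen_ord (leqnSn n) e.

Definition split_weights (R : Type) (n : nat) (gamma : 'I_n -> R) (c : 'I_n)
    (g1 g2 : R) (e : 'I_n.+1) : R :=
  match unlift ord_max e with
  | None => g2
  | Some e0 => if e0 == c then g1 else gamma e0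
  end.

(* Main.v *)
Require Import Defs.
From HB Require Import structures.
From mathcomp Require Import all_boot all_order all_algebra all_fingroup.
Import Order.TTheory GRing.Theory Num.Theory.
Local Open Scope ring_scope.
Set Implicit Arguments. Unset Strict Implicit. Unset Printing Implicit Defensive.

Definition Sp {F : fieldType} {k p : nat} (N : 'M[F]_(k,p)) (A : {set 'I_k}) : 'M_p :=
  (\sum_(i in A) <<row i N>>)%MS.

Lemma mrankE m n (M : 'M['F_2]_(m,n)) A : mrank M A = \rank (Sp M^T A).
Proof.
rewrite /mrank -mxrank_tr trmx_mxsub; apply/eqP; rewrite eqn_leq; apply/andP; split; apply: mxrankS.
  apply/row_subP => i; rewrite row_mxsub mxsub_id.
  apply: (sumsmx_sup (enum_val i)); first exact: enum_valP.
  by rewrite genmxE.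
apply/sumsmx_subP => i Ai; rewrite genmxE.
rewrite -(enum_rankK_in Ai Ai) -[row _ _](row_rowsub (fun j : 'I_#|A| => enum_val j)).
exact: row_sub.
Qed.

Definition Emx {F : fieldType} (m : nat) : 'M[F]_(m, 1 + m) := row_mx 0 1%:M.
Definition Lmx {F : fieldType} (m : nat) : 'M[F]_(1 + m, 1) := col_mx 1 0.

Lemma EL (F : fieldType) m : (Emx m : 'M[F]_(m, 1+m)) *m Lmx m = 0.
Proof. by rewrite /Emx /Lmx mul_row_col mul0mx mulmx0 addr0. Qed.

Lemma Efree (F : fieldType) m : row_free (Emx m : 'M[F]_(m, 1+m)).
Proof.
rewrite /row_free eqn_leq rank_leq_row /=.
have H : (\rank (Emx m *m col_mx (0 : 'M[F]_(1, m)) 1%:M) = m)%N.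
  by rewrite /Emx mul_row_col mulmx0 mul1mx add0r mxrank1.
by rewrite -{1}H mxrankM_maxl.
Qed.

Lemma key (F : fieldType) m k (w : 'rV[F]_(1 + m)) (X : 'M[F]_(k, m)) :
  w *m Lmx m = 1 -> \rank (<<w>> + X *m Emx m)%MS = (1 + \rank X)%N.
Proof.
move=> wL; rewrite mxrank_disjoint_sum.
  rewrite genmxE rank_rV mxrankMfree ?Efree //.
  case: eqP => // w0; move: wL; rewrite w0 mul0mx => /eqP.
  by rewrite eq_sym oner_eq0.
set K := (<<w>> :&: _)%MS.
have /submxP[D HD] : (K <= w)%MS by rewrite -(genmxE w) capmxSl.
have /submxP[D' HD'] : (K <= X *m Emx m)%MS by rewrite capmxSr.
have : K *m Lmx m = D.
  by rewrite HD -mulmxA wL mulmx1.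
have : K *m Lmx m = 0 by rewrite HD' -!mulmxA EL !mulmx0.
move=> -> D0.
by rewrite HD -D0 mul0mx.
Qed.

Definition Nnew m n (M : 'M['F_2]_(m,n)) (c : 'I_n) : 'M['F_2]_(n.+1, 1 + m) :=
  \matrix_(i < n.+1) match unlift ord_max i with
                     | None => row_mx 1 0
                     | Some e => row_mx (if e == c then 1 else 0) (row e M^T)
                     end.

Lemma oc_lift n (e : 'I_n) : old_col e = lift ord_max e.
Proof. by apply/val_inj; rewrite /= /bump leqNgt ltn_ord. Qed.

Lemma oc_inj n : injective (@old_col n).
Proof. by move=> x y H; apply/val_inj; move: (congr1 val H). Qed.

Lemma om_notin n (B : {set 'I_n}) : ord_max \notin [set old_col x | x in B].
Proof.
apply/imsetP => -[x _] /(congr1 val) /= H.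
by move: (ltn_ord x); rewrite -H ltnn.
Qed.

Lemma row_old m n (M : 'M['F_2]_(m,n)) c e :
  row (old_col e) (Nnew M c) = row_mx (if e == c then 1 else 0) (row e M^T).
Proof. by rewrite rowK oc_lift liftK. Qed.

Lemma row_new m n (M : 'M['F_2]_(m,n)) c :
  row ord_max (Nnew M c) = row_mx 1 0.
Proof. by rewrite rowK unlift_none. Qed.

Lemma spOld m n (M : 'M['F_2]_(m,n)) c (B : {set 'I_n}) : c \notin B ->
  (Sp (Nnew M c) [set old_col x | x in B] :=: Sp M^T B *m Emx m)%MS.
Proof.
move=> cB; rewrite /Sp big_imset; last by move=> x y _ _; apply: oc_inj.
apply: eqmx_sym; apply: eqmx_trans (sumsmxMr_gen _ _ _) _.
rewrite (eq_bigr (fun i => <<row i M^T *m Emx m>>)%MS); last first.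
  by move=> i _; apply: eq_genmx; apply: eqmxMr; apply: genmxE.
rewrite [X in (_ :=: X)%MS](eq_bigr (fun i => <<row i M^T *m Emx m>>)%MS).
  exact: eqmx_refl.
move=> i iB; rewrite row_old.
have -> : (i == c) = false by apply/eqP => ic; move: cB; rewrite -ic iB.
by rewrite /Emx mul_mx_row mulmx0 mulmx1.
Qed.

Lemma PL m : (row_mx 1 0 : 'rV['F_2]_(1 + m)) *m Lmx m = 1.
Proof. by rewrite /Lmx mul_row_col mulmx1 mul0mx addr0. Qed.

Lemma PcL m (v : 'rV['F_2]_m) : (row_mx 1 v : 'rV['F_2]_(1 + m)) *m Lmx m = 1.
Proof. by rewrite /Lmx mul_row_col mulmx1 mulmx0 addr0. Qed.

Lemma R1 m n (M : 'M['F_2]_(m,n)) c (B : {set 'I_n}) : c \notin B ->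
  \rank (Sp (Nnew M c) [set old_col x | x in B]) = \rank (Sp M^T B).
Proof. by move=> cB; rewrite (spOld M cB) mxrankMfree ?Efree. Qed.

Lemma R2 m n (M : 'M['F_2]_(m,n)) c (B : {set 'I_n}) : c \notin B ->
  \rank (Sp (Nnew M c) (ord_max |: [set old_col x | x in B])) = (1 + \rank (Sp M^T B))%N.
Proof.
move=> cB; rewrite /Sp big_setU1 ?om_notin //= -/(Sp _ _) row_new.
rewrite (adds_eqmx (eqmx_refl _) (spOld M cB)).
exact: key (PL m).
Qed.

Lemma R3 m n (M : 'M['F_2]_(m,n)) c (B : {set 'I_n}) : c \notin B ->
  \rank (Sp (Nnew M c) [set old_col x | x in c |: B]) = (1 + \rank (Sp M^T B))%N.
Proof.
move=> cB; rewrite imsetU1 /Sp big_setU1 ?mem_imset //=; last exact: oc_inj.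
rewrite -/(Sp _ _) row_old eqxx.
rewrite (adds_eqmx (eqmx_refl _) (spOld M cB)).
exact: key (PcL _).
Qed.

Lemma R4 m n (M : 'M['F_2]_(m,n)) c (B : {set 'I_n}) : c \notin B ->
  \rank (Sp (Nnew M c) (ord_max |: [set old_col x | x in c |: B]))
  = (1 + \rank (Sp M^T (c |: B)))%N.
Proof.
move=> cB.
have ocn : old_col c \notin [set old_col x | x in B].
  by rewrite mem_imset //; exact: oc_inj.
set P : 'rV['F_2]_(1 + m) := row_mx 1 0.
set Pc : 'rV['F_2]_(1 + m) := row_mx 1 (row c M^T).
set S' := Sp M^T (c |: B).
have HS' : S' = (<<row c M^T>> + Sp M^T B)%MS by rewrite /S' /Sp big_setU1.
have HL : Sp (Nnew M c) (ord_max |: [set old_col x | x in c |: B])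
   = (<<P>> + (<<Pc>> + Sp (Nnew M c) [set old_col x | x in B]))%MS.
  by rewrite /Sp big_setU1 ?om_notin // imsetU1 big_setU1 //= row_new row_old eqxx.
have HPc : Pc = P + row c M^T *m Emx m.
  by rewrite /P /Pc /Emx mul_mx_row mulmx0 mulmx1 add_row_mx addr0 add0r.
rewrite -(key _ (PL m)) HL; apply/eqP; rewrite eqn_leq; apply/andP; split; apply: mxrankS.
  rewrite addsmx_sub addsmxSl /= addsmx_sub; apply/andP; split.
    rewrite genmxE HPc; apply: addmx_sub_adds; first by rewrite genmxE.
    apply: submxMr; apply: (sumsmx_sup c); first by rewrite setU11.
    by rewrite genmxE.
  rewrite (spOld M cB); apply: submx_trans (addsmxSr _ _); apply: submxMr.
  by rewrite HS' addsmxSr.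
rewrite addsmx_sub addsmxSl /= HS' (addsmxMr _ _ _) addsmx_sub; apply/andP; split.
  rewrite (eqmxMr _ (genmxE _)).
  have -> : row c M^T *m Emx m = Pc - P by rewrite HPc addrC addKr.
  apply: addmx_sub.
    by apply: submx_trans (addsmxSr _ _); apply: submx_trans (addsmxSl _ _); rewrite genmxE.
  by rewrite (eqmx_opp P); apply: submx_trans (addsmxSl _ _); rewrite genmxE.
rewrite -(spOld M cB); apply: submx_trans (addsmxSr _ _); exact: addsmxSr.
Qed.
Lemma E1 (R : fieldType) (q gc g1 g2 : R) : q != 0 -> gc != 0 -> g1 != 0 -> g2 != 0 ->
  1 + q / gc = (1 + q / g1) * (1 + q / g2) ->
  (1 + g1 / q + g2 / q) * gc = g1 * g2 / q.
Proof.
move=> hq hc h1 h2 H.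
have H2 : (1 + q / gc) * gc * (g1 * g2) = (1 + q / g1) * g1 * ((1 + q / g2) * g2) * gc.
  rewrite H; move: (1 + q/g1) (1 + q/g2) => a b. by rewrite [a * g1 * _]mulrACA [LHS]mulrAC.
move: H2; rewrite !mulrDl !mul1r !divfK // !mulrDr !mulrDl -!addrA.
rewrite [g1 * g2 * gc]mulrC => /addrI H3.
have H4 : g1 * g2 = g1 * gc + (g2 * gc + q * gc).
  apply: (mulfI hq); rewrite H3 !mulrDr !mulrA; congr (_ + (_ + _)).
  by rewrite [q * g1]mulrC.
apply: (mulIf hq); rewrite divfK // H4 !mulrDl.
rewrite -[g1 / q * gc * q]mulrA [gc * q]mulrC mulrA divfK //.
rewrite -[g2 / q * gc * q]mulrA [gc * q]mulrC mulrA divfK //.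
by rewrite addrC -addrA.
Qed.
Lemma sum_split (R : zmodType) (T : finType) (x : T) (F : {set T} -> R) :
  \sum_(A : {set T}) F A = \sum_(A : {set T} | x \notin A) (F A + F (x |: A)).
Proof.
rewrite (bigID (fun A : {set T} => x \in A)) /= addrC big_split /=; congr (_ + _).
rewrite (reindex_onto (fun A => x |: A) (fun A => A :\ x)) /=; last first.
  by move=> A xA; rewrite setD1K.
apply: eq_bigl => A; rewrite setU11 /=.
case: (boolP (x \in A)) => xA /=.
  by apply/eqP => H; move: xA; rewrite -H setD11.
by rewrite setU1K ?eqxx.
Qed.
Lemma sum_old (R : zmodType) n (G : {set 'I_n.+1} -> R) :
  \sum_(A : {set 'I_n.+1} | ord_max \notin A) G A
  = \sum_(B : {set 'I_n}) G [set old_col x | x in B].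
Proof.
transitivity (\sum_(A in [set [set old_col x | x in B] | B : {set 'I_n}]) G A).
  apply: eq_bigl => A; apply/idP/idP.
    move=> AN; apply/imsetP; exists [set x | old_col x \in A]; first by [].
    apply/setP => y; case: (unliftP ord_max y) => [j ->|->].
      by rewrite -oc_lift mem_imset ?inE //; exact: oc_inj.
    rewrite (negbTE AN); apply/esym/negbTE/imsetP => -[x _] /(congr1 val) /= H.
    by move: (ltn_ord x); rewrite -H ltnn.
  case/imsetP => B _ ->; apply/imsetP => -[x _] /(congr1 val) /= H.
  by move: (ltn_ord x); rewrite -H ltnn.
rewrite big_imset //= => B1 B2 _ _; apply: imset_inj; exact: oc_inj.
Qed.

Lemma E2 (R : fieldType) (q gc g1 g2 w : R) (r s : nat) : q != 0 ->
  (1 + g1 / q + g2 / q) * gc = g1 * g2 / q ->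
  (1 + g1 / q + g2 / q) * (q ^- r * w + q ^- s * (gc * w))
  = q ^- r * w + q ^- (1 + r) * (g2 * w)
    + (q ^- (1 + r) * (g1 * w) + q ^- (1 + s) * (g2 * (g1 * w))).
Proof.
move=> hq K.
have Ex k : q ^- (1 + k) = q ^- k / q by rewrite exprD expr1 invfM mulrC.
rewrite !Ex; move: (q ^- r) (q ^- s) => a b.
rewrite mulrDr [_ * (b * _)]mulrCA [_ * (gc * w)]mulrA K.
rewrite !mulrDl mul1r.
have t1 : g1 / q * (a * w) = a / q * (g1 * w).
  by rewrite !mulrA [g1 / q * a]mulrC mulrA [a * g1]mulrC -!mulrA [q^-1 * _]mulrCA; apply: mulrCA.
have t2 : g2 / q * (a * w) = a / q * (g2 * w).
  by rewrite !mulrA [g2 / q * a]mulrC mulrA [a * g2]mulrC -!mulrA [q^-1 * _]mulrCA [g2 * _]mulrCA.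
have t3 : b * (g1 * g2 / q * w) = b / q * (g2 * (g1 * w)).
  by rewrite [g1 * g2]mulrC -!mulrA [g1 * (q^-1 * w)]mulrCA [g2 * (q^-1 * _)]mulrCA.
rewrite t1 t2 t3 -!addrA; congr (_ + _); exact: addrCA.
Qed.

Lemma gw_old (R : Type) n (gamma : 'I_n -> R) c g1 g2 e :
  split_weights gamma c g1 g2 (old_col e) = if e == c then g1 else gamma e.
Proof. by rewrite /split_weights oc_lift liftK. Qed.

Lemma gw_new (R : Type) n (gamma : 'I_n -> R) c g1 g2 :
  split_weights gamma c g1 g2 ord_max = g2.
Proof. by rewrite /split_weights unlift_none. Qed.

Lemma P1 (R : comRingType) n (gamma : 'I_n -> R) c g1 g2 (B : {set 'I_n}) : c \notin B ->
  \prod_(e in [set old_col x | x in B]) split_weights gamma c g1 g2 e = \prod_(e in B) gamma e.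
Proof.
move=> cB; rewrite big_imset /=; last by move=> x y _ _; apply: oc_inj.
apply: eq_bigr => e eB; rewrite gw_old.
by have -> : (e == c) = false by apply/eqP => ec; move: cB; rewrite -ec eB.
Qed.

Lemma P3 (R : comRingType) n (gamma : 'I_n -> R) c g1 g2 (B : {set 'I_n}) : c \notin B ->
  \prod_(e in [set old_col x | x in c |: B]) split_weights gamma c g1 g2 e
  = g1 * \prod_(e in B) gamma e.
Proof.
move=> cB; rewrite imsetU1 big_setU1 ?mem_imset //=; last exact: oc_inj.
by rewrite gw_old eqxx P1.
Qed.

Theorem mainTheorem5 (R : realFieldType) (q : R) (hq : q != 0)
    (m n : nat) (M : 'M['F_2]_(m, n)) (gamma : 'I_n -> R) (c : 'I_n)
    (g1 g2 : R) (hgc : gamma c != 0) (hg1 : 0 < g1) (hg2 : 0 < g2)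
    (hrel : 1 + q / gamma c = (1 + q / g1) * (1 + q / g2)) :
  exists M' : 'M['F_2]_(m.+1, n.+1),
    (1 + g1 / q + g2 / q) * Ztilde M q gamma
    = Ztilde M' q (split_weights gamma c g1 g2).
Proof.
have K := E1 hq hgc (lt0r_neq0 hg1) (lt0r_neq0 hg2) hrel.
exists (Nnew M c)^T.
rewrite /Ztilde (sum_split ord_max) sum_old [RHS](sum_split c) (sum_split c) mulr_sumr.
apply: eq_bigr => B cB.
rewrite !mrankE trmxK R1 // R2 // R3 // R4 //.
rewrite !big_setU1 ?om_notin //= !gw_new P1 // P3 //.
exact: E2.
Qed.
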